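(* Let $\underline{X}$ be an observation from a distribution $P_{(\theta,\underline{\eta})}$ indexed by $(\theta,\underline{\eta})$ in a parameter space $H$, where $\theta$ is a real parameter of interest and $\underline{\eta}$ a nuisance parameter vector. Let $C_0(\underline{X})=[L_0(\underline{X}),U_0(\underline{X})]$ be any confidence interval for $\theta$ (of any level), with $L_0\le U_0$ statistics. Fix $\theta_0$ and consider $H_0:\theta=\theta_0$ versus $H_A:\theta\ne\theta_0$. Define the test statistic $$T_2(\underline{x},\theta_0)=\min\{\theta_0-L_0(\underline{x}),\,U_0(\underline{x})-\theta_0\}$$ and $$h_2(\underline{x},\theta_0)=\sup_{(\theta,\underline{\eta})\in H,\ \theta=\theta_0} P_{(\theta,\underline{\eta})}\big(T_2(\underline{X},\theta_0)\le T_2(\underline{x},\theta_0)\big).$$ Then: (i) $h_2(\underline{X},\theta_0)$ is a valid p-value for $H_0$, i.e. for every $a\in[0,1]$, $\sup_{(\theta,\underline{\eta})\in H,\ \theta=\theta_0}P_{(\theta,\underline{\eta})}(h_2(\underline{X},\theta_0)\le a)\le a$. (ii) For $\alpha\in[0,1]$, the interval $C_0^M(\underline{x})=\overline{\{\theta_0: h_2(\underline{x},\theta_0)>\alpha\}}$ has infimum coverage probability at least $1-\alpha$, i.e. $\inf_{(\theta,\underline{\eta})\in H}P_{(\theta,\underline{\eta})}(\theta\in C_0^M(\underline{X}))\ge1-\alpha$.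
   Context: For a set $A$ of parameter values in $\mathbb{R}$, $\overline{A}$ denotes the smallest closed simply connected set (closed interval) containing $A$. The infimum coverage probability (ICP) of an interval $C(\underline{X})$ for $\theta$ is $\inf_{(\theta,\underline{\eta})\in H}P_{(\theta,\underline{\eta})}(\theta\in C(\underline{X}))$; an interval is a ''$1-\alpha$ exact'' interval if its ICP is at least $1-\alpha$. *)

(* Defs.v *)
From HB Require Import structures.
From mathcomp Require Import all_boot all_order all_algebra.
From mathcomp Require Import all_classical all_reals all_analysis.
Set Implicit Arguments. Unset Strict Implicit. Unset Printing Implicit Defensive.
Import Order.TTheory GRing.Theory Num.Theory numFieldNormedType.Exports.
Local Open Scope classical_set_scope.
Local Open Scope ring_scope.

Definition T2 {Omega : Type} {R : realType} (L0 U0 : Omega -> R)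
  (x : Omega) (th0 : R) : R := Num.min (th0 - L0 x) (U0 x - th0).

Definition h2 {d} {Omega : measurableType d} {R : realType} {Eta : Type}
  (H : set (R * Eta)) (P : R -> Eta -> probability Omega R)
  (L0 U0 : Omega -> R) (x : Omega) (th0 : R) : \bar R :=
  ereal_sup [set P th0 eta [set y | T2 L0 U0 y th0 <= T2 L0 U0 x th0]
            | eta in [set eta | H (th0, eta)]].

(* smallest closed simply connected subset of R (closed interval, possibly
   unbounded or empty) containing A *)
Definition closed_interval_hull {R : realType} (A : set R) : set R :=
  [set x : R | forall C : set R, closed C ->
     (forall y z w, C y -> C z -> y <= w <= z -> C w) ->
     A `<=` C -> C x].

(* inner probability: sup of P S over measurable S contained in A
   (equals P A whenever A is measurable) *)
Definition inner_prob {d} {Omega : measurableType d} {R : realType}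
  (mu : probability Omega R) (A : set Omega) : \bar R :=
  ereal_sup [set mu S | S in [set S | measurable S /\ S `<=` A]].

(* Main.v *)
Require Import Defs.
From HB Require Import structures.
From mathcomp Require Import all_boot all_order all_algebra.
From mathcomp Require Import all_classical all_reals all_analysis.
From mathcomp Require Import lra.
Import Order.TTheory GRing.Theory Num.Theory numFieldNormedType.Exports.
Local Open Scope classical_set_scope.
Local Open Scope ring_scope.

Section Aux.
Context (d : measure_display) (Omega : measurableType d) (R : realType).

Lemma meas_le (T : Omega -> R) (mT : measurable_fun setT T) (t : R) :
  measurable [set y | (T y <= t)%R].
Proof.
have := mT measurableT _ (measurable_itv `]-oo, t]).
rewrite setTI; congr measurable; apply/seteqP; split => y /=;
  by rewrite in_itv /=.
Qed.

Lemma union_le (mu : probability Omega R) (T : Omega -> R)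
  (mT : measurable_fun setT T) (u : nat -> R)
  (hu : forall n m, (n <= m)%N -> u n <= u m) (a : R)
  (bd : forall n, (mu [set y | (T y <= u n)%R] <= a%:E)%E) :
  measurable (\bigcup_n [set y | (T y <= u n)%R]) /\
  (mu (\bigcup_n [set y | (T y <= u n)%R]) <= a%:E)%E.
Proof.
have mF : forall n, measurable [set y | (T y <= u n)%R] by move=> n; exact: meas_le.
have mU : measurable (\bigcup_n [set y | (T y <= u n)%R]).
  exact: bigcupT_measurable.
split => //.
have nd : nondecreasing_seq (fun n => [set y | (T y <= u n)%R]).
  move=> n m nm; apply/subsetPset => y /= Ty; exact: le_trans Ty (hu _ _ nm).
have := @nondecreasing_cvg_mu _ _ _ mu _ mF mU nd.
move=> cv; rewrite -(cvg_lim _ cv) //; apply: lime_le.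
  by apply/cvg_ex; eexists; exact: cv.
by near=> n; exact: bd.
Unshelve. all: by end_near.
Qed.

Lemma key (mu : probability Omega R) (T : Omega -> R)
  (mT : measurable_fun setT T) (S : set R) (a : R) (a0 : 0 <= a)
  (down : forall s t, S t -> s <= t -> S s)
  (bd : forall t, S t -> (mu [set y | (T y <= t)%R] <= a%:E)%E) :
  measurable (T @^-1` S) /\ (mu (T @^-1` S) <= a%:E)%E.
Proof.
have [[s0 Ss0]|nS] := pselect (exists s, S s); last first.
  have -> : S = set0 by apply/seteqP; split => // s Ss; apply: nS; exists s.
  by rewrite preimage_set0 measure0 lee_fin.
have [ub|nub] := pselect (has_ubound S).
  have hs : has_sup S by split => //; exists s0.
  set c := sup S.
  have Sc : forall t, S t -> t <= c by move=> t; exact: ub_le_sup.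
  have [Sc'|nSc] := pselect (S c).
    have -> : T @^-1` S = [set y | (T y <= c)%R].
      apply/seteqP; split => y /=; first exact: Sc.
      by move=> h; exact: down Sc' h.
    by split; [exact: meas_le | exact: bd].
  pose u n : R := c - (n.+1%:R)^-1.
  have epsP : forall n : nat, 0 < (n.+1%:R : R)^-1 by move=> n; rewrite invr_gt0.
  have -> : T @^-1` S = \bigcup_n [set y | (T y <= u n)%R].
    apply/seteqP; split => y /=.
      move=> Sy; have lt : T y < c.
        by rewrite lt_neqAle Sc // andbT; apply/eqP => E; apply: nSc; rewrite -E.
      have e0 : 0 < c - T y by rewrite subr_gt0.
      exists (Num.trunc (c - T y)^-1) => //=.
      have h1 := truncnS_gt (c - T y)^-1.
      have h2 : ((Num.trunc (c - T y)^-1).+1%:R)^-1 < c - T y.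
        by rewrite -[X in _ < X]invrK ltf_pV2 ?posrE ?invr_gt0 ?ltr0n.
      rewrite /u /=; move: h2; set k := _^-1; move=> h2; lra.
    move=> [n _ /= h].
    have [e Se he] := sup_adherent (epsP n) hs.
    apply: down Se _; apply: le_trans h _; exact: ltW.
  apply: union_le => //.
    move=> n m nm; rewrite /u lerD2l lerN2 lef_pV2 ?posrE ?ltr0n //.
    by rewrite ler_nat.
  move=> n; apply: bd.
  have [e Se he] := sup_adherent (epsP n) hs.
  apply: down Se _; exact: ltW.
have SnR : forall n : nat, S n%:R.
  move=> n; apply: contra_notP nub => nS; exists n%:R => t St.
  by apply: contra_notP nS => /negP; rewrite -ltNge => /ltW; exact: down St.
have -> : T @^-1` S = \bigcup_n [set y | (T y <= n%:R)%R].
  apply/seteqP; split => y /=.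
    move=> _; exists (Num.trunc (T y)).+1 => //=.
    exact: ltW (truncnS_gt _).
  by move=> [n _ /= h]; exact: down (SnR n) h.
apply: union_le => //.
  by move=> n m nm; rewrite ler_nat.
by move=> n; apply: bd.
Qed.
End Aux.

Lemma part1 (d : measure_display) (Omega : measurableType d)
  (R : realType) (Eta : Type) (H : set (R * Eta))
  (P : R -> Eta -> probability Omega R) (L0 U0 : Omega -> R)
  (mL0 : measurable_fun setT L0) (mU0 : measurable_fun setT U0)
  (th0 a : R) (a0 : 0 <= a) (eta : Eta) (He : H (th0, eta)) :
  measurable [set x | (h2 H P L0 U0 x th0 <= a%:E)%E] /\
  (P th0 eta [set x | (h2 H P L0 U0 x th0 <= a%:E)%E] <= a%:E)%E.
Proof.
pose T := fun x => T2 L0 U0 x th0.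
have mT : measurable_fun setT T.
  apply: (measurable_realfun.measurable_minr (f := cst th0 \- L0) (g := U0 \- cst th0)).
    by apply: measurable_realfun.measurable_funB => //; exact: measurable_cst.
  by apply: measurable_realfun.measurable_funB => //; exact: measurable_cst.
pose G t := ereal_sup [set P th0 eta' [set y | (T y <= t)%R]
              | eta' in [set eta' | H (th0, eta')]].
have -> : [set x | (h2 H P L0 U0 x th0 <= a%:E)%E] =
          T @^-1` [set t | (G t <= a%:E)%E] by [].
apply: key => //.
  move=> s t /= Gt st; apply: (@le_trans _ _ (G t)) => //.
  apply: ge_ereal_sup => _ [e He' <-].
  apply: (@le_trans _ _ (P th0 e [set y | (T y <= t)%R])); last first.
    by apply: ereal_sup_ubound; exists e.
  apply: le_measure; rewrite ?inE; try exact: meas_le.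
  by move=> y /= Ty; exact: le_trans Ty st.
move=> t /= Gt; apply: (@le_trans _ _ (G t)) => //.
by apply: ereal_sup_ubound; exists eta.
Qed.

Theorem theorem1 (d : measure_display) (Omega : measurableType d)
  (R : realType) (Eta : Type) (H : set (R * Eta))
  (P : R -> Eta -> probability Omega R) (L0 U0 : Omega -> R)
  (mL0 : measurable_fun setT L0) (mU0 : measurable_fun setT U0)
  (hLU : forall x, L0 x <= U0 x) :
  (forall (th0 a : R), 0 <= a <= 1 ->
     (ereal_sup [set P th0 eta [set x | h2 H P L0 U0 x th0 <= a%:E]
                 | eta in [set eta | H (th0, eta)]] <= a%:E)%E)
  /\
  (forall alpha : R, 0 <= alpha <= 1 ->
     ((1 - alpha)%:E <=
      ereal_inf [set inner_prob (P th_eta.1 th_eta.2)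
                   [set x | closed_interval_hull
                              [set th0 | (alpha%:E < h2 H P L0 U0 x th0)%E]
                              th_eta.1]
                 | th_eta in H])%E).
Proof.
split.
  move=> th0 a /andP[a0 a1].
  apply: ge_ereal_sup => _ [eta He <-].
  by have [] := @part1 _ _ _ _ _ P _ _ mL0 mU0 _ _ a0 _ He.
move=> alpha /andP[al0 al1].
apply: le_ereal_inf_tmp => _ [[th eta] Hte <-] /=.
have [mB PB] := @part1 _ _ _ _ _ P _ _ mL0 mU0 _ _ al0 _ Hte.
set B := [set x | (h2 H P L0 U0 x th <= alpha%:E)%E] in mB PB.
apply: (@le_trans _ _ (P th eta (~` B))).
  by rewrite probability_setC // EFinB; apply: leeB.
apply: ereal_sup_ubound; exists (~` B); last by [].
split; first exact: measurableC.
move=> x /= nB C _ _ sub; apply: sub => /=.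
by rewrite ltNge; apply/negP.
Qed.
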